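(* Let $G=(\mathcal V,\mathcal E)$, $\chi$, $C$, $2\le m\le n$ and $\mathbb L_m$ be as in the context. Let $\mathcal R_1=\max_{\Gamma\in\mathbb L_m}\|\Gamma\|_1$, $\mathcal R_H=\max_{\Gamma,\Gamma'\in\mathbb L_m}\big(H(\Gamma)-H(\Gamma')\big)$, let $\mathcal V_m$ be the set of vertices of $\mathbb L_m$, let $\mathcal V_m^*\subseteq\mathcal V_m$ be the set of vertices minimizing $\langle C,\cdot\rangle$ over $\mathbb L_m$, and let $\Delta=\min_{V_1\in\mathcal V_m\setminus\mathcal V_m^*,\,V_2\in\mathcal V_m^*}\big(\langle C,V_1\rangle-\langle C,V_2\rangle\big)$. Suppose $\mathbb L_m$ is tight and $|\mathcal V_m^*|=1$. If $\eta\ge \frac{2\mathcal R_1\log(64\mathcal R_1)+2\mathcal R_1+2\mathcal R_H}{\Delta}$, then the rounded assignment $x\in\chi^n$ given by $x_i=\arg\max_{x'\in\chi}(\Gamma_\eta^* )_i(x')$ for each $i\in\mathcal V$ is a MAP assignment, i.e. it maximizes $\sum_{i\in\mathcal V}\theta_i(x_i)+\sum_{ij\in\mathcal E}\theta_{ij}(x_i,x_j)$ over $\chi^n$.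
   Context: A pairwise graphical model has vertex set $\mathcal V=\{1,\dots,n\}$, edge set $\mathcal E$ (each vertex lies on at least one edge), and state set $\chi=\{0,\dots,d-1\}$, with potentials $\theta_i:\chi\to\mathbb R$ ($i\in\mathcal V$) and $\theta_{ij}:\chi^2\to\mathbb R$ ($ij\in\mathcal E$). The cost is $C=-\theta$. For $2\le m\le n$, the Sherali–Adams polytope $\mathbb L_m$ is the set of collections $\Gamma=(\Gamma_S)_{S\subseteq\mathcal V,\,1\le|S|\le m}$ of nonnegative functions $\Gamma_S:\chi^S\to[0,\infty)$, each summing to $1$, such that for $S\subset T$ marginalizing $\Gamma_T$ over the variables in $T\setminus S$ gives $\Gamma_S$; write $\Gamma_i=\Gamma_{\{i\}}$ and $\Gamma_{ij}(x_i,x_j)=\Gamma_{\{i,j\}}(x_i,x_j)$. The cost $C$ is extended to all coordinates with value $0$ on subsets that are neither singletons nor edges, and $\langle C,\Gamma\rangle=\sum_i\sum_{x}C_i(x)\Gamma_i(x)+\sum_{ij\in\mathcal E}\sum_{x_i,x_j}C_{ij}(x_i,x_j)\Gamma_{ij}(x_i,x_j)$. $\|\Gamma\|_1$ is the sum of absolute values of all entries. The entropy is $H(\Gamma)=\sum(\Gamma(-\log\Gamma+1))$ summed over all entries. For $\eta>0$, $\Gamma_\eta^*$ denotes the minimizer of $\langle C,\Gamma\rangle-\frac1\eta H(\Gamma)$ over $\Gamma\in\mathbb L_m$. $\mathbb L_m$ is called tight if the linear program $\max_{\Gamma\in\mathbb L_m}\langle\theta,\Gamma\rangle$ has an integral (all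 entries in $\{0,1\}$) optimal solution. *)

(* Defs.v *)
From HB Require Import structures.
From mathcomp Require Import all_boot all_order all_algebra.
From mathcomp Require Import reals exp.
Set Implicit Arguments. Unset Strict Implicit. Unset Printing Implicit Defensive.
Import Order.TTheory GRing.Theory Num.Theory.
Local Open Scope ring_scope.

(* A coordinate (S, x_S) with
   x_S in chi^S is encoded as a partial assignment y : 'I_n -> option 'I_d
   whose support {i | y i != None} is S. *)
Definition pa (n d : nat) := {ffun 'I_n -> option 'I_d}.

Definition supp n d (y : pa n d) : {set 'I_n} := [set i | y i != None].

Definition valid (m : nat) n d (y : pa n d) : bool :=
  (1 <= #|supp y|)%N && (#|supp y| <= m)%N.

Definition pt1 n d (i : 'I_n) (a : 'I_d) : pa n d :=
  [ffun k => if k == i then Some a else None].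
Definition pt2 n d (i j : 'I_n) (a b : 'I_d) : pa n d :=
  [ffun k => if k == i then Some a else if k == j then Some b else None].

Definition agrees n d (S : {set 'I_n}) (z y : pa n d) : bool :=
  [forall i in S, z i == y i].

(* Sherali-Adams polytope L_m.  Vectors are functions on all partial
   assignments, required to vanish on non-coordinates (so that equality of
   vectors is equality of their coordinates). *)
Definition SA_poly (R : realType) (n d m : nat) (G : pa n d -> R) : Prop :=
  [/\ (forall y, ~~ valid m y -> G y = 0),
      (forall y, valid m y -> 0 <= G y),
      (forall S : {set 'I_n}, (1 <= #|S|)%N -> (#|S| <= m)%N ->
          \sum_(y : pa n d | supp y == S) G y = 1) &
      (forall S T : {set 'I_n}, S \proper T -> (1 <= #|S|)%N -> (#|T| <= m)%N ->
          forall y : pa n d, supp y = S ->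
            G y = \sum_(z : pa n d | (supp z == T) && agrees S z y) G z)].

(* <c, Gamma> for node potentials c1 and edge potentials c2;
   edges are ordered pairs (i, j) with i < j. *)
Definition inner (R : realType) n d (E : {set 'I_n * 'I_n})
    (c1 : 'I_n -> 'I_d -> R) (c2 : 'I_n -> 'I_n -> 'I_d -> 'I_d -> R)
    (G : pa n d -> R) : R :=
  \sum_(i : 'I_n) \sum_(a : 'I_d) c1 i a * G (pt1 i a)
  + \sum_(e in E) \sum_(a : 'I_d) \sum_(b : 'I_d)
        c2 e.1 e.2 a b * G (pt2 e.1 e.2 a b).

Definition costC (R : realType) n d (E : {set 'I_n * 'I_n})
    (th1 : 'I_n -> 'I_d -> R) (th2 : 'I_n -> 'I_n -> 'I_d -> 'I_d -> R)
    (G : pa n d -> R) : R :=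
  inner E (fun i a => - th1 i a) (fun i j a b => - th2 i j a b) G.

Definition norm1 (R : realType) n d m (G : pa n d -> R) : R :=
  \sum_(y : pa n d | valid m y) `|G y|.

(* H(Gamma) = sum Gamma (-log Gamma + 1)  (ln 0 = 0, so 0 log 0 = 0) *)
Definition entropy (R : realType) n d m (G : pa n d -> R) : R :=
  \sum_(y : pa n d | valid m y) G y * (- ln (G y) + 1).

Definition is_vertex (R : realType) n d m (V : pa n d -> R) : Prop :=
  SA_poly m V /\
  forall (G1 G2 : pa n d -> R) (t : R), SA_poly m G1 -> SA_poly m G2 ->
    0 < t < 1 -> V = (fun y => t * G1 y + (1 - t) * G2 y) -> G1 = G2.

Definition is_opt_vertex (R : realType) n d m (E : {set 'I_n * 'I_n})
    th1 th2 (V : pa n d -> R) : Prop :=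
  is_vertex m V /\
  forall G, SA_poly m G -> costC E th1 th2 V <= costC E th1 th2 G.

Definition tight (R : realType) n d m (E : {set 'I_n * 'I_n})
    (th1 : 'I_n -> 'I_d -> R) th2 : Prop :=
  exists G : pa n d -> R,
    [/\ SA_poly m G,
        (forall y, valid m y -> G y = 0 \/ G y = 1) &
        forall G', SA_poly m G' -> inner E th1 th2 G' <= inner E th1 th2 G].

Definition score (R : realType) n d (E : {set 'I_n * 'I_n})
    (th1 : 'I_n -> 'I_d -> R) (th2 : 'I_n -> 'I_n -> 'I_d -> 'I_d -> R)
    (x : 'I_n -> 'I_d) : R :=
  \sum_(i : 'I_n) th1 i (x i) + \sum_(e in E) th2 e.1 e.2 (x e.1) (x e.2).

Definition is_MAP (R : realType) n d E th1 th2 (x : 'I_n -> 'I_d) : Prop :=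
  forall x' : 'I_n -> 'I_d,
    @score R n d E th1 th2 x' <= score E th1 th2 x.

Definition graph_ok n (E : {set 'I_n * 'I_n}) : Prop :=
  (forall e, e \in E -> (e.1 < e.2)%N) /\
  (forall i : 'I_n, exists2 e, e \in E & (e.1 = i \/ e.2 = i)).

(* Main.v *)
Require Import Defs.
From HB Require Import structures.
From mathcomp Require Import all_boot all_order all_algebra.
From mathcomp Require Import reals exp boolp.
From mathcomp.algebra_tactics Require Import ring lra.
Import Order.TTheory GRing.Theory Num.Theory.
Local Open Scope ring_scope.
Set Implicit Arguments. Unset Strict Implicit.

Section Ana.
Variable R : realType.
Implicit Types a b t q v : R.

Lemma phi_conc a b : 0 <= a -> 0 <= b -> (a = 0 -> b = 0) ->
  b * (- ln b + 1) - a * (- ln a + 1) <= (- ln a) * (b - a).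
Proof.
move=> a0 b0 ab.
have [a0e|ane] := eqVneq a 0; first by rewrite (ab a0e) a0e !mul0r subrr mulr0.
have ap : 0 < a by rewrite lt_neqAle eq_sym ane.
have [->|bne] := eqVneq b 0.
  rewrite mul0r sub0r; nra.
have bp : 0 < b by rewrite lt_neqAle eq_sym bne.
have h : ln (a / b) <= a / b - 1.
  have := @le_ln1Dx R (a / b - 1); rewrite addrCA subrr addr0; apply.
  by rewrite ltrBrDl subrr divr_gt0.
rewrite ln_div ?posrE // in h.
have h2 : b * (ln a - ln b) <= a - b.
  have := ler_wpM2l (ltW bp) h.
  have -> // : b * (a / b - 1) = a - b.
  by field; rewrite gt_eqF.
by rewrite -subr_ge0; move: h2; rewrite -subr_ge0 => h2;
  apply: le_trans h2 _; rewrite le_eqVlt; apply/orP; left; apply/eqP; ring.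
Qed.

Lemma coord_bound t v q : 0 < t -> t < 1 -> (v = 0 \/ v = 1) -> 0 <= q -> q <= 1 ->
  (- ln ((1 - t) * v + t * q)) * (q - v)
   <= (- ln t) * q + q * (- ln q + 1) - v * (- ln v + 1) + v.
Proof.
move=> t0 t1 hv q0 q1.
have lt0 : 0 <= - ln t by rewrite oppr_ge0 ln_le0 // ltW.
have lq0 : 0 <= - ln q by rewrite oppr_ge0 ln_le0.
case: hv => ->.
  rewrite mulr0 add0r subr0 mul0r subr0 addr0.
  have [->|qne] := eqVneq q 0; first by rewrite !(mulr0, mul0r) addr0.
  have qp : 0 < q by rewrite lt_neqAle eq_sym qne.
  rewrite lnM ?posrE // opprD; nra.
rewrite ln1 oppr0 add0r mul1r mulr1 subrK.
have g1 : 1 - t + t * q <= 1 by nra.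
have g0 : 0 < 1 - t + t * q by nra.
have l0 : 0 <= - ln (1 - t + t * q) by rewrite oppr_ge0 ln_le0.
have : (- ln (1 - t + t * q)) * (q - 1) <= 0 by nra.
move=> h; apply: (le_trans h).
have : 0 <= q * (- ln q + 1) by nra.
nra.
Qed.
End Ana.


Section SA.
Variables (R : realType) (n d m : nat).
Implicit Types (A B G : pa n d -> R) (y z : pa n d).

Lemma valid_supp y z : supp z = supp y -> valid m y -> valid m z.
Proof. by rewrite /valid => ->. Qed.

Lemma SA_cmb A B a b : SA_poly m A -> SA_poly m B -> a + b = 1 ->
  (forall y, valid m y -> 0 <= a * A y + b * B y) ->
  SA_poly m (fun y => a * A y + b * B y).
Proof.
case=> [Ai An As Am] [Bi Bn Bs Bm] ab nn; split => //.
- by move=> y hy; rewrite Ai // Bi // !mulr0 addr0.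
- move=> S h1 h2; rewrite big_split /= -!mulr_sumr As // Bs //.
  by rewrite !mulr1.
- move=> S T ST h1 h2 y hy; rewrite big_split /= -!mulr_sumr.
  by rewrite -(Am S T) // -(Bm S T).
Qed.

Lemma SA_ge0 G y : SA_poly m G -> 0 <= G y.
Proof.
case=> Gi Gn _ _; have [v|nv] := boolP (valid m y); first exact: Gn.
by rewrite Gi.
Qed.

Lemma SA_le1 G y : SA_poly m G -> valid m y -> G y <= 1.
Proof.
move=> sG vy; have [Gi Gn Gs Gm] := sG.
have /andP[h1 h2] := vy.
rewrite -(Gs (supp y) h1 h2) (bigD1 y) //= lerDl.
by apply: sumr_ge0 => z _; exact: SA_ge0.
Qed.

Lemma inner_lin E c1 c2 A B a b :
  inner E c1 c2 (fun y => a * A y + b * B y) =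
  a * inner E c1 c2 A + b * inner E c1 c2 B.
Proof.
rewrite /inner !mulrDr addrACA; congr (_ + _).
  rewrite !mulr_sumr -big_split; apply: eq_bigr => i _.
  rewrite !mulr_sumr -big_split; apply: eq_bigr => a' _ /=; ring.
rewrite !mulr_sumr -big_split; apply: eq_bigr => e _.
rewrite !mulr_sumr -big_split; apply: eq_bigr => a' _ /=.
rewrite !mulr_sumr -big_split; apply: eq_bigr => b' _ /=; ring.
Qed.

Lemma costC_lin E th1 th2 A B a b :
  costC E th1 th2 (fun y => a * A y + b * B y) =
  a * costC E th1 th2 A + b * costC E th1 th2 B.
Proof. exact: inner_lin. Qed.

Lemma costC_inner E th1 th2 G : costC E th1 th2 G = - inner E th1 th2 G.
Proof.
rewrite /costC /inner opprD -!sumrN; congr (_ + _).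
  apply: eq_bigr => i _; rewrite -sumrN; apply: eq_bigr => a _; ring.
apply: eq_bigr => e _; rewrite -sumrN; apply: eq_bigr => a _.
rewrite -sumrN; apply: eq_bigr => b _; ring.
Qed.

End SA.


Section Push.
Variables (R : realType) (n d m : nat).
Implicit Types (A B G : pa n d -> R) (y z : pa n d).

Definition nz G := #|[set y | G y != 0]|.

Lemma exists_lt G1 G2 y0 : SA_poly m G1 -> SA_poly m G2 -> G1 y0 != G2 y0 ->
  exists y, G1 y < G2 y.
Proof.
move=> s1 s2 ne.
case: (boolP [exists y, G1 y < G2 y]) => [/existsP //|/existsPn H].
exfalso.
have H' : forall z, G2 z <= G1 z by move=> z; rewrite leNgt; exact: H.
have [v0|nv] := boolP (valid m y0); last first.
  by have [i1 _ _ _] := s1; have [i2 _ _ _] := s2; rewrite i1 // i2 // eqxx in ne.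
have lt : G2 y0 < G1 y0 by rewrite lt_neqAle eq_sym ne H'.
have /andP[h1 h2] := v0.
case: s1 => _ _ S1 _; case: s2 => _ _ S2 _.
have := S1 _ h1 h2; have := S2 _ h1 h2.
rewrite (bigD1 y0) //= [X in _ -> X = _ -> _](bigD1 y0) //= => e2 e1.
have : G2 y0 + \sum_(i | (supp i == supp y0) && (i != y0)) G2 i <
       G1 y0 + \sum_(i | (supp i == supp y0) && (i != y0)) G1 i.
  by apply: ltr_leD => //; apply: ler_sum => z _.
by rewrite e1 e2 ltxx.
Qed.

Lemma push G1 G2 t : SA_poly m G1 -> SA_poly m G2 -> 0 < t -> t < 1 ->
  (exists y, G1 y < G2 y) ->
  exists al, [/\ t < al, SA_poly m (fun y => al * G1 y + (1 - al) * G2 y) &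
    (nz (fun y => (al * G1 y + (1 - al) * G2 y)%R) <
     nz (fun y => (t * G1 y + (1 - t) * G2 y)%R))%N].
Proof.
move=> s1 s2 t0 t1 [y0 hy0].
pose Lt y := t * G1 y + (1 - t) * G2 y.
pose f y := Lt y / (G2 y - G1 y).
case: (@arg_minP _ _ _ y0 [pred y | G1 y < G2 y] f hy0) => ys /= hys ysmin.
have g1 y : 0 <= G1 y by exact: SA_ge0 s1.
have g2 y : 0 <= G2 y by exact: SA_ge0 s2.
have zb y : Lt y = 0 -> G1 y = 0 /\ G2 y = 0.
  move=> h; have := g1 y; have := g2 y; rewrite /Lt in h; split; nra.
have Ltys : 0 < Lt ys by have := g1 ys; have := g2 ys; rewrite /Lt; nra.
have fys : 0 < f ys by rewrite /f divr_gt0 // subr_gt0.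
have ef : f ys * (G2 ys - G1 ys) = Lt ys.
  by rewrite /f divfK // gt_eqF // subr_gt0.
have eL al y : al * G1 y + (1 - al) * G2 y = Lt y + (al - t) * (G1 y - G2 y).
  by rewrite /Lt; ring.
exists (t + f ys); split.
- by rewrite ltrDl.
- apply: SA_cmb => //; first by ring.
  move=> y vy; rewrite eL (_ : t + f ys - t = f ys); last by ring.
  have Lty : 0 <= Lt y by have := g1 y; have := g2 y; rewrite /Lt; nra.
  have [lty|] := ltP (G1 y) (G2 y).
    have := ysmin y lty; rewrite /f ler_pdivlMr ?subr_gt0 // => h.
    nra.
  move=> h; have : 0 <= f ys * (G1 y - G2 y) by rewrite mulr_ge0 // ?subr_ge0 // ltW.
  lra.
- rewrite /nz; apply: proper_card; apply/properP; split.
    apply/subsetP => y; rewrite !inE; apply: contra => /eqP h.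
    by have [-> ->] := zb y h; rewrite !mulr0 addr0.
  exists ys; rewrite !inE.
    by apply/eqP => h; move: Ltys; rewrite /Lt h ltxx.
  apply/negPn.
  rewrite eL (_ : t + f ys - t = f ys); last by ring.
  apply/eqP.
  rewrite -ef; ring.
Qed.

End Push.


Section Decomp.
Variables (R : realType) (n d m : nat) (E : {set 'I_n * 'I_n}).
Variables (th1 : 'I_n -> 'I_d -> R) (th2 : 'I_n -> 'I_n -> 'I_d -> 'I_d -> R).
Variables (Delta : R) (Vs : pa n d -> R).
Hypothesis optV : is_opt_vertex m E th1 th2 Vs.
Hypothesis uniqV : forall W, is_opt_vertex m E th1 th2 W -> W = Vs.
Hypothesis hD : forall V1 V2 : pa n d -> R, is_vertex m V1 ->
  ~ is_opt_vertex m E th1 th2 V1 -> is_opt_vertex m E th1 th2 V2 ->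
  Delta <= costC E th1 th2 V1 - costC E th1 th2 V2.

Local Notation cost := (costC E th1 th2).

Definition Pdec (G : pa n d -> R) := exists eps (Q : pa n d -> R),
  [/\ 0 <= eps <= 1, SA_poly m Q, G = (fun y => (1 - eps) * Vs y + eps * Q y) &
      eps * Delta <= cost G - cost Vs].

Lemma SA_Vs : SA_poly m Vs.
Proof. by case: optV => -[]. Qed.

Lemma Pdec_cmb A B l : Pdec A -> Pdec B -> 0 <= l <= 1 ->
  Pdec (fun y => l * A y + (1 - l) * B y).
Proof.
move=> [eA [QA [/andP[eA0 eA1] sQA hA cA]]] [eB [QB [/andP[eB0 eB1] sQB hB cB]]].
move=> /andP[l0 l1].
have hlA : 0 <= l * eA by rewrite mulr_ge0.
have hlB : 0 <= (1 - l) * eB by rewrite mulr_ge0 // subr_ge0.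
have [w [w0 w1 hw]] : exists w, [/\ 0 <= w, w <= 1 &
   (l * eA + (1 - l) * eB) * w = l * eA].
  have [e0|ene] := eqVneq (l * eA + (1 - l) * eB) 0.
    by exists 1; split => //; rewrite e0 mul0r; lra.
  have ep : 0 < l * eA + (1 - l) * eB by rewrite lt_neqAle eq_sym ene; lra.
  exists (l * eA / (l * eA + (1 - l) * eB)); split.
  - by rewrite divr_ge0 // ltW.
  - by rewrite ler_pdivrMr // mul1r; lra.
  - by rewrite mulrC divfK.
exists (l * eA + (1 - l) * eB), (fun y => w * QA y + (1 - w) * QB y); split.
- apply/andP; split; first lra.
  nra.
- apply: SA_cmb => //; first by ring.
  move=> y _; have := SA_ge0 y sQA; have := SA_ge0 y sQB; nra.
- apply: funext => y; rewrite hA hB.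
  transitivity (Vs y + (l * eA) * (QA y - Vs y) + ((1 - l) * eB) * (QB y - Vs y)).
    by ring.
  move: hw; set e := (l * eA + (1 - l) * eB) => hw.
  have hb : (1 - l) * eB = e - e * w by rewrite hw /e; ring.
  clearbody e; rewrite -hw hb; ring.
- rewrite costC_lin.
  have -> : l * cost A + (1 - l) * cost B - cost Vs =
    l * (cost A - cost Vs) + (1 - l) * (cost B - cost Vs) by ring.
  have h1 : l * (eA * Delta) <= l * (cost A - cost Vs) by rewrite ler_wpM2l.
  have h2 : (1 - l) * (eB * Delta) <= (1 - l) * (cost B - cost Vs).
    by rewrite ler_wpM2l // subr_ge0.
  have -> : (l * eA + (1 - l) * eB) * Delta = l * (eA * Delta) + (1 - l) * (eB * Delta)
    by ring.
  exact: lerD.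
Qed.

Lemma Pdec_all G : SA_poly m G -> Pdec G.
Proof.
suff H : forall k G, (nz G < k)%N -> SA_poly m G -> Pdec G.
  by move=> sG; apply: (H (nz G).+1).
elim=> [//|k IH] {}G hk sG.
have [vG|nvG] := pselect (is_vertex m G).
  have [oG|noG] := pselect (is_opt_vertex m E th1 th2 G).
    have eG := uniqV oG.
    exists 0, Vs; split => //.
    - by rewrite lexx ler01.
    - exact: SA_Vs.
    - by apply: funext => y; rewrite eG; ring.
    - by rewrite eG subrr mul0r.
  exists 1, G; split => //.
  - by rewrite ler01 lexx.
  - by apply: funext => y; ring.
  - by rewrite mul1r; apply: hD.
have [G1 [G2 [t [s1 s2 /andP[t0 t1] hG neq]]]] : exists G1 G2 t,
  [/\ SA_poly m G1, SA_poly m G2, 0 < t < 1,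
      G = (fun y => t * G1 y + (1 - t) * G2 y) & G1 <> G2].
  apply: contrapT => H; apply: nvG; split => // G1 G2 t s1 s2 t01 hG.
  apply: contrapT => neq; apply: H; exists G1, G2, t; split => //.
have [y0 hy0] : exists y0, G1 y0 != G2 y0.
  apply: contrapT => H; apply: neq; apply: funext => y.
  apply/eqP; apply: contrapT => h; apply: H; exists y; exact/negP.
have [al1 [hal1 sA nA]] := push s1 s2 t0 t1 (exists_lt s1 s2 hy0).
have t0' : 0 < 1 - t by rewrite subr_gt0.
have t1' : 1 - t < 1 by rewrite ltrBlDr ltrDl.
have [al2 [hal2 sB nB]] := push s2 s1 t0' t1' (exists_lt s2 s1 (y0:=y0) ltac:(by rewrite eq_sym)).
have eG2 : (fun y => (1 - t) * G2 y + (1 - (1 - t)) * G1 y) = G.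
  by apply: funext => y; rewrite hG; ring.
rewrite eG2 in nB; rewrite -hG in nA.
have ltk : (nz G <= k)%N by [].
have PA := IH _ (leq_trans nA ltk) sA.
have PB := IH _ (leq_trans nB ltk) sB.
have [lam [l0 l1 ht]] : exists lam, [/\ 0 < lam, lam < 1 &
   t = (1 - al2) + lam * (al1 - (1 - al2))].
  have dp : 0 < al1 - (1 - al2) by lra.
  exists ((t - (1 - al2)) / (al1 - (1 - al2))); split.
  - by rewrite divr_gt0 //; lra.
  - by rewrite ltr_pdivrMr // mul1r; lra.
  - by rewrite divfK ?gt_eqF //; ring.
have -> : G = (fun y => lam * (al1 * G1 y + (1 - al1) * G2 y) +
                        (1 - lam) * (al2 * G2 y + (1 - al2) * G1 y)).
  by rewrite hG; apply: funext => y; rewrite ht; ring.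
apply: (Pdec_cmb PA PB); apply/andP; split; lra.
Qed.

End Decomp.


Section Gam.
Variables (R : realType) (n d m : nat).
Implicit Types (G : pa n d -> R) (y z : pa n d) (f : 'I_n -> 'I_d).

Definition agreef f y := [forall k in supp y, y k == Some (f k)].
Definition gam f y : R := if valid m y && agreef f y then 1 else 0.
Definition rf f (S : {set 'I_n}) : pa n d :=
  [ffun k => if k \in S then Some (f k) else None].

Lemma in_supp y k : (k \in supp y) = (y k != None).
Proof. by rewrite inE. Qed.

Lemma supp_rf f S : supp (rf f S) = S.
Proof. by apply/setP => k; rewrite in_supp ffunE; case: (k \in S). Qed.

Lemma agree_rf f S : agreef f (rf f S).
Proof.
apply/forall_inP => k; rewrite supp_rf => kS; by rewrite ffunE kS.
Qed.

Lemma eq_rf f y : agreef f y -> y = rf f (supp y).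
Proof.
move/forall_inP => h; apply/ffunP => k; rewrite ffunE.
case: ifP => [/h/eqP //|]; rewrite in_supp => /negbFE/eqP //.
Qed.

Lemma agree_trans f y z (S : {set 'I_n}) : agreef f z -> agrees S z y ->
  supp y = S -> S \subset supp z -> agreef f y.
Proof.
move=> /forall_inP az /forall_inP ag sy sS; apply/forall_inP => k ky.
rewrite sy in ky; rewrite -(eqP (ag k ky)); apply: az; exact: (subsetP sS).
Qed.

Lemma SA_gam f : SA_poly m (gam f).
Proof.
split.
- by move=> y hv; rewrite /gam (negbTE hv).
- by move=> y _; rewrite /gam; case: ifP => _; rewrite ?ler01 ?lexx.
- move=> S h1 h2; rewrite (bigD1 (rf f S)) /=; last by rewrite supp_rf.
  rewrite /gam /valid supp_rf h1 h2 agree_rf /= big1 ?addr0 // => y /andP[/eqP sy ne].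
  case: ifP => // /andP[_ /eq_rf ey]; by rewrite ey sy eqxx in ne.
- move=> S T ST h1 h2 y sy.
  have cST := proper_card ST.
  have vy : valid m y by rewrite /valid sy h1 /= (leq_trans (ltnW cST)).
  have [ay|nay] := boolP (agreef f y).
    rewrite {1}/gam vy ay /=.
    rewrite (bigD1 (rf f T)) /=; last first.
      rewrite supp_rf eqxx /=; apply/forall_inP => k kS.
      have kT : k \in T by apply: (subsetP (proper_sub ST)).
      move/forall_inP: ay => /(_ k); rewrite sy => /(_ kS) /eqP ->.
      by rewrite ffunE kT.
    rewrite /gam /valid supp_rf h2 (leq_trans h1 (ltnW cST)) agree_rf /=.
    rewrite big1 ?addr0 // => z /andP[/andP[/eqP sz _] ne].
    case: ifP => // /andP[_ /eq_rf ez]; by rewrite ez sz eqxx in ne.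
  rewrite {1}/gam (negbTE nay) andbF big1 // => z /andP[/eqP sz ag].
  rewrite /gam; case: ifP => // /andP[_ az].
  have := agree_trans az ag sy; rewrite sz => /(_ (proper_sub ST)).
  by rewrite (negbTE nay).
Qed.

Lemma supp_pt1 (i : 'I_n) (a : 'I_d) : supp (pt1 i a) = [set i].
Proof. by apply/setP => k; rewrite in_supp /pt1 ffunE inE; case: (k == i). Qed.

Lemma pt_le G y k a : SA_poly m G -> valid m y -> y k = Some a ->
  G y <= G (pt1 k a).
Proof.
move=> sG vy yk; have [Gi Gn Gs Gm] := sG.
have kin : k \in supp y by rewrite in_supp yk.
have [e|ne] := eqVneq (supp y) [set k].
  suff -> : y = pt1 k a by rewrite lexx.
  apply/ffunP => k'; rewrite /pt1 ffunE; case: ifP => [/eqP -> //|kk].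
  by apply/eqP; rewrite -[_ == _]negbK -in_supp e inE kk.
have pr : [set k] \proper supp y.
  by rewrite properEneq eq_sym ne sub1set kin.
have /andP[_ h2] := vy.
rewrite [G (pt1 k a)](Gm _ _ pr _ h2 (pt1 k a) (supp_pt1 k a)); last by rewrite cards1.
rewrite (bigD1 y) /=; last first.
  rewrite eqxx /=; apply/forall_inP => k'; rewrite inE => /eqP ->.
  by rewrite yk /pt1 ffunE eqxx.
rewrite lerDl; apply: sumr_ge0 => z _; exact: SA_ge0 z sG.
Qed.

Lemma zero_dis G f z : SA_poly m G ->
  (forall i a, G (pt1 i a) = (a == f i)%:R) ->
  valid m z -> ~~ agreef f z -> G z = 0.
Proof.
move=> sG hp vz /forallPn [k]; rewrite negb_imply => /andP[kin ne].
move: kin; rewrite in_supp; case ezk: (z k) => [a|] // _.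
have := pt_le sG vz ezk; rewrite hp.
have -> : (a == f k) = false by apply/eqP => e; rewrite ezk e eqxx in ne.
move=> h; apply/eqP; by rewrite eq_le h (SA_ge0 z sG).
Qed.

Lemma char_gam G f : SA_poly m G ->
  (forall i a, G (pt1 i a) = (a == f i)%:R) -> forall y, G y = gam f y.
Proof.
move=> sG hp y; have [Gi Gn Gs Gm] := sG.
have [vy|nvy] := boolP (valid m y); last by rewrite Gi // /gam (negbTE nvy).
rewrite /gam vy /=.
have [ay|nay] := boolP (agreef f y); last exact: zero_dis.
have /andP[h1 h2] := vy.
have := Gs _ h1 h2; rewrite (bigD1 y) //= big1 ?addr0 // => z /andP[/eqP sz ne].
apply: (zero_dis sG hp); first by rewrite /valid sz.
apply: contra ne => az; apply/eqP; by rewrite (eq_rf az) (eq_rf ay) sz.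
Qed.

End Gam.


Section Inner.
Variables (R : realType) (n d m : nat).
Implicit Types (f : 'I_n -> 'I_d).

Lemma gam_pt1 f i a : (1 <= m)%N -> gam R m f (pt1 i a) = (a == f i)%:R :> R.
Proof.
move=> hm; rewrite /gam /valid supp_pt1 cards1 hm /=.
have -> : agreef f (pt1 i a) = (a == f i).
  apply/forall_inP/eqP => [/(_ i)|-> k].
    by rewrite supp_pt1 inE eqxx /pt1 ffunE eqxx => /(_ erefl) /eqP [].
  by rewrite supp_pt1 inE => /eqP ->; rewrite /pt1 ffunE eqxx.
by case: (a == f i).
Qed.

Lemma supp_pt2 (i j : 'I_n) (a b : 'I_d) : supp (pt2 i j a b) = [set i; j].
Proof.
apply/setP => k; rewrite in_supp /pt2 ffunE !inE.
by case: (k == i); case: (k == j).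
Qed.

Lemma gam_pt2 f i j a b : i != j -> (2 <= m)%N ->
  gam R m f (pt2 i j a b) = ((a == f i) && (b == f j))%:R :> R.
Proof.
move=> ij hm; rewrite /gam /valid supp_pt2 cards2 ij /= hm /=.
have ji : (j == i) = false by rewrite eq_sym (negbTE ij).
have -> : agreef f (pt2 i j a b) = (a == f i) && (b == f j).
  apply/forall_inP/andP => [H|[/eqP ea /eqP eb] k].
    have := H i; have := H j; rewrite supp_pt2 !inE !eqxx orbT /pt2 !ffunE.
    move=> /(_ erefl) hj /(_ erefl) hi; move: hj hi; rewrite eqxx ji eqxx.
    by move=> /eqP [->] /eqP [->]; rewrite !eqxx.
  rewrite supp_pt2 !inE /pt2 ffunE => /orP[] /eqP ->; rewrite ?eqxx ?ji ?ea ?eb //.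
by case: (_ && _).
Qed.

Lemma inner_gam (E : {set 'I_n * 'I_n}) th1 th2 f :
  (forall e, e \in E -> e.1 != e.2) -> (2 <= m)%N ->
  inner E th1 th2 (gam R m f) = score E th1 th2 f :> R.
Proof.
move=> hE hm; rewrite /inner /score; congr (_ + _).
  apply: eq_bigr => i _; rewrite (bigD1 (f i)) //= gam_pt1 ?(leq_trans _ hm) //.
  rewrite eqxx mulr1 big1 ?addr0 // => a /negbTE na.
  by rewrite gam_pt1 ?(leq_trans _ hm) // na mulr0.
apply: eq_bigr => e he; rewrite (bigD1 (f e.1)) //= [X in _ + X = _]big1 ?addr0; last first.
  move=> a /negbTE na; apply: big1 => b _; by rewrite gam_pt2 ?hE // na mulr0.
rewrite (bigD1 (f e.2)) //= gam_pt2 ?hE // !eqxx mulr1 big1 ?addr0 // => b /negbTE nb.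
by rewrite gam_pt2 ?hE // nb andbF mulr0.
Qed.

End Inner.


Lemma pt1_of n d (y : pa n d) (i : 'I_n) : supp y = [set i] -> exists a, y = pt1 i a.
Proof.
move=> sy; have : i \in supp y by rewrite sy inE.
rewrite in_supp; case ey: (y i) => [a|] // _; exists a.
apply/ffunP => k; rewrite /pt1 ffunE; case: ifP => [/eqP -> //|kk].
by apply/eqP; rewrite -[_ == _]negbK -in_supp sy inE kk.
Qed.

Lemma pt1_inj n d (i : 'I_n) (a b : 'I_d) : pt1 i a = pt1 i b -> a = b.
Proof. by move=> e; have := congr1 (fun g : pa n d => g i) e; rewrite /pt1 !ffunE eqxx => -[]. Qed.

Lemma valid_pt1 n d m (i : 'I_n) (a : 'I_d) : (1 <= m)%N -> valid m (pt1 i a).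
Proof. by move=> hm; rewrite /valid supp_pt1 cards1. Qed.

Unset Implicit Arguments. Set Strict Implicit.
Theorem theorem1 (R : realType) (n d m : nat) (E : {set 'I_n * 'I_n})
    (th1 : 'I_n -> 'I_d -> R) (th2 : 'I_n -> 'I_n -> 'I_d -> 'I_d -> R)
    (R1 RH Delta eta : R) (Gs : pa n d -> R) (x : 'I_n -> 'I_d) :
  graph_ok E ->
  (2 <= m)%N -> (m <= n)%N ->
  (exists2 G : pa n d -> R, SA_poly m G & norm1 m G = R1) ->
  (forall G : pa n d -> R, SA_poly m G -> norm1 m G <= R1) ->
  (exists G G' : pa n d -> R, [/\ SA_poly m G, SA_poly m G' & entropy m G - entropy m G' = RH]) ->
  (forall G G' : pa n d -> R, SA_poly m G -> SA_poly m G' -> entropy m G - entropy m G' <= RH) ->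
  (exists V1 V2 : pa n d -> R, [/\ is_vertex m V1, ~ is_opt_vertex m E th1 th2 V1,
                     is_opt_vertex m E th1 th2 V2 &
                     costC E th1 th2 V1 - costC E th1 th2 V2 = Delta]) ->
  (forall V1 V2 : pa n d -> R, is_vertex m V1 -> ~ is_opt_vertex m E th1 th2 V1 ->
     is_opt_vertex m E th1 th2 V2 ->
     Delta <= costC E th1 th2 V1 - costC E th1 th2 V2) ->
  tight m E th1 th2 ->
  (exists V : pa n d -> R, is_opt_vertex m E th1 th2 V /\
     forall W : pa n d -> R, is_opt_vertex m E th1 th2 W -> W = V) ->
  0 < eta ->
  SA_poly m Gs ->
  (forall G : pa n d -> R, SA_poly m G ->
     costC E th1 th2 Gs - eta^-1 * entropy m Gs
       <= costC E th1 th2 G - eta^-1 * entropy m G) ->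
  (2 * R1 * ln (64 * R1) + 2 * R1 + 2 * RH) / Delta <= eta ->
  (forall (i : 'I_n) (a : 'I_d), Gs (pt1 i a) <= Gs (pt1 i (x i))) ->
  is_MAP E th1 th2 x.
Proof.
move=> [gE1 gE2] m2 mn _ R1max _ RHmax [V1 [V2 [vV1 nV1 oV2 eD]]] hD
  [G0 [sG0 int0 max0]] [Vs [optV uniqV]] eta0 sGs Gsopt heta hx.
have m1 : (1 <= m)%N by apply: leq_trans m2.
have hE : forall e, e \in E -> e.1 != e.2.
  by move=> e /gE1 h; rewrite neq_ltn h.
set cost := costC E th1 th2.
have sVs : SA_poly m Vs by case: optV => -[].
have Vopt : forall G, SA_poly m G -> cost Vs <= cost G by case: optV.
have Dp : 0 < Delta.
  rewrite -eD subr_gt0 ltNge; apply/negP => h; apply: nV1; split => // G sG.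
  by apply: le_trans h _; case: oV2 => _; apply.
have dec := fun G (sG : SA_poly m G) => Pdec_all optV uniqV hD sG.
have Vint : forall y, valid m y -> Vs y = 0 \/ Vs y = 1.
  have [e0 [Q0 [/andP[e00 e01] sQ0 hG0 cG0]]] := dec _ sG0.
  have c0 : cost G0 <= cost Vs.
    by rewrite /cost !costC_inner lerN2; apply: max0.
  have e0z : e0 = 0.
    apply/eqP; rewrite eq_le e00 andbT.
    have : e0 * Delta <= 0 by apply: le_trans cG0 _; rewrite subr_le0.
    by rewrite pmulr_lle0.
  move=> y vy; have := int0 y vy; rewrite hG0 e0z subr0 mul1r mul0r addr0.
  done.
have [xs hxs] : exists xs : 'I_n -> 'I_d, forall i, Vs (pt1 i (xs i)) = 1.
  apply: (@fin_all_exists _ (fun _ => 'I_d) (fun i a => Vs (pt1 i a) = 1)) => i.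
  have [Vi Vn Vsl Vm] := sVs.
  have hsl := Vsl [set i]; rewrite cards1 in hsl; have {}hsl := hsl erefl m1.
  have [y [/eqP sy ny]] : exists y, supp y == [set i] /\ Vs y != 0.
    apply: contrapT => H; move: hsl; rewrite big1 => [/eqP|y hy].
      by rewrite eq_sym oner_eq0.
    by apply/eqP; apply: contrapT => ne; apply: H; exists y; split => //; apply/negP.
  have [a ya] := pt1_of sy; exists a; rewrite -ya.
  have vy : valid m y by rewrite /valid sy cards1.
  by case: (Vint y vy) => // e; rewrite e eqxx in ny.
have Vpt1 : forall i a, Vs (pt1 i a) = (a == xs i)%:R.
  move=> i a; have [->|ne] := eqVneq a (xs i); first by rewrite hxs.
  have [Vi Vn Vsl Vm] := sVs.
  have hsl := Vsl [set i]; rewrite cards1 in hsl; have {}hsl := hsl erefl m1.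
  rewrite (bigD1 (pt1 i (xs i))) /= ?supp_pt1 // hxs in hsl.
  rewrite (bigD1 (pt1 i a)) /= ?supp_pt1 ?eqxx /= in hsl; last first.
    by apply/eqP => /pt1_inj; apply/eqP.
  have : 0 <= \sum_(i0 | (supp i0 == [set i]) && (i0 != pt1 i (xs i)) && (i0 != pt1 i a)) Vs i0.
    by apply: sumr_ge0 => z _; apply: SA_ge0 _ sVs.
  have := SA_ge0 (pt1 i a) sVs.
  move=> h1 h2; apply/eqP; rewrite eq_le h1 /=; lra.
have VG : Vs = gam R m xs.
  apply: funext => y; apply: char_gam => // i a; by rewrite Vpt1.
have [eps [Q [/andP[ep0 ep1] sQ hGs cGs]]] := dec _ sGs.
have Q01 : forall y, valid m y -> 0 <= Q y <= 1.
  by move=> y vy; rewrite (SA_ge0 y sQ) (SA_le1 sQ vy).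
have RH0 : 0 <= RH by have := RHmax _ _ sVs sVs; rewrite subrr.
have [i0] : exists i0 : 'I_n, True.
  have n0 : (0 < n)%N by apply: leq_trans mn; apply: leq_trans m2.
  by exists (Ordinal n0).
move=> _.
have n1V : 1 <= norm1 m Vs.
  rewrite /norm1 (bigD1 (pt1 i0 (xs i0))) ?valid_pt1 //= hxs normr1 lerDl.
  by apply: sumr_ge0 => y _; apply: normr_ge0.
have R1ge1 : 1 <= R1 by apply: le_trans n1V (R1max _ sVs).
have epsh : eps < 2^-1.
  rewrite ltNge; apply/negP => he.
  pose t := eps / 2.
  have t0 : 0 < t by rewrite /t; lra.
  have t1 : t < 1 by rewrite /t; lra.
  have t4 : 4^-1 <= t by rewrite /t; lra.
  have et : 0 < eps - t by rewrite /t; lra.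
  pose Gt := fun y => (1 - t) * Vs y + t * Q y.
  have sGt : SA_poly m Gt.
    apply: SA_cmb => //; first by ring.
    move=> y vy; have := SA_ge0 y sVs; have := SA_ge0 y sQ; nra.
  have opt := Gsopt _ sGt.
  have cQ : Delta <= cost Q - cost Vs.
    have : eps * Delta <= eps * (cost Q - cost Vs).
      apply: le_trans cGs _; rewrite hGs /cost costC_lin -/cost.
      by rewrite le_eqVlt; apply/orP; left; apply/eqP; ring.
    by rewrite ler_pM2l //; lra.
  have ecost : cost Gs - cost Gt = (eps - t) * (cost Q - cost Vs).
    by rewrite hGs /Gt /cost !costC_lin -/cost; ring.
  pose K := (- ln t) * R1 + RH + R1.
  have Hb : entropy m Gs - entropy m Gt <= (eps - t) * K.
    rewrite /entropy -sumrB.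
    apply: (@le_trans _ _ (\sum_(y | valid m y) (- ln (Gt y)) * (Gs y - Gt y))).
      apply: ler_sum => y vy; apply: phi_conc.
      - by apply: SA_ge0 _ sGt.
      - by apply: SA_ge0 _ sGs.
      - move=> h; rewrite hGs /=; move: h; rewrite /Gt.
        have := SA_ge0 y sVs; have := SA_ge0 y sQ; nra.
    apply: (@le_trans _ _ (\sum_(y | valid m y) (eps - t) *
       ((- ln t) * `|Q y| + Q y * (- ln (Q y) + 1) - Vs y * (- ln (Vs y) + 1) + `|Vs y|))).
      apply: ler_sum => y vy.
      have -> : Gs y - Gt y = (eps - t) * (Q y - Vs y) by rewrite hGs /Gt; ring.
      rewrite mulrCA; apply: ler_wpM2l; first exact: ltW.
      have /andP[q0 q1] := Q01 y vy.
      rewrite (ger0_norm q0) (ger0_norm (SA_ge0 y sVs)); apply: coord_bound => //; exact: Vint.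
    rewrite -mulr_sumr ler_pM2l //.
    have -> : \sum_(y | valid m y) ((- ln t) * `|Q y| + Q y * (- ln (Q y) + 1) -
         Vs y * (- ln (Vs y) + 1) + `|Vs y|) =
       (- ln t) * norm1 m Q + (entropy m Q - entropy m Vs) + norm1 m Vs.
      rewrite /norm1 /entropy mulr_sumr -sumrB -!big_split /=.
      by apply: eq_bigr => y _; ring.
    rewrite /K; apply: lerD; first apply: lerD.
    - by apply: ler_wpM2l; [rewrite oppr_ge0 ln_le0 // ltW | exact: R1max].
    - exact: RHmax.
    - exact: R1max.
  have key : Delta * eta <= K.
    have h1 : (eps - t) * Delta <= (eps - t) * (cost Q - cost Vs) by rewrite ler_wpM2l // ltW.
    have h2 : cost Gs - cost Gt <= eta^-1 * (entropy m Gs - entropy m Gt).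
      by move: opt; rewrite /cost mulrBr; lra.
    have h3 : eta^-1 * (entropy m Gs - entropy m Gt) <= eta^-1 * ((eps - t) * K).
      by rewrite ler_wpM2l // invr_ge0 ltW.
    have : (eps - t) * Delta <= (eps - t) * (eta^-1 * K).
      rewrite mulrCA; apply: le_trans h1 _; rewrite -ecost; apply: le_trans h2 _; exact: h3.
    rewrite ler_pM2l // -(ler_pM2r eta0) mulrAC mulVf ?gt_eqF // mul1r.
    done.
  have key2 : 2 * R1 * ln (64 * R1) + 2 * R1 + 2 * RH <= Delta * eta.
    by move: heta; rewrite ler_pdivrMr // [eta * _]mulrC.
  have L0 : 0 <= ln (64 * R1) by apply: ln_ge0; lra.
  have Lt : - ln t <= ln (64 * R1).
    rewrite -subr_ge0 opprK -lnM ?posrE //; last lra.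
    by apply: ln_ge0; nra.
  have p1 : R1 * (- ln t) <= R1 * ln (64 * R1) by rewrite ler_wpM2l //; lra.
  have p2 : 0 <= R1 * ln (64 * R1) by rewrite mulr_ge0 //; lra.
  move: key key2; rewrite /K; nra.
have xe : forall i, x i = xs i.
  move=> i; apply/eqP; apply: contraT => ne.
  have h1 := hx i (xs i).
  have vq a : Q (pt1 i a) <= 1 by apply: (SA_le1 sQ); exact: valid_pt1.
  have vq0 a : 0 <= Q (pt1 i a) by apply: SA_ge0 _ sQ.
  move: h1; rewrite hGs /= !Vpt1 eqxx (negbTE ne) /=.
  have := vq (x i); have := vq0 (xs i); nra.
move=> x'.
have -> : score E th1 th2 x = score E th1 th2 xs.
  by rewrite /score; congr (_ + _); apply: eq_bigr => ? _; rewrite !xe.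
rewrite -!(inner_gam th1 th2 _ hE m2) -VG.
have := Vopt _ (SA_gam R m x'); rewrite /cost !costC_inner; lra.
Qed.
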